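(* Let $\Gamma$ be a Deza graph with parameters $(n,k,k-1,a)$, $k>1$, $\beta=1$. Let $x$ be an $NA$-vertex and $y$ a vertex not in $\{x,x',x_b,x_b'\}$. Then either all possible edges between $\{x,x_b\}$ and $\{y,y_b\}$ are present, or there are no such edges.
   Context: A Deza graph with parameters $(n,k,b,a)$, $a\le b$, is a $k$-regular graph on $n$ vertices in which any two distinct vertices have $a$ or $b$ common neighbours; $\beta$ is the number of vertices $u\ne v$ with exactly $b$ common neighbours with a given vertex $v$. Since $\beta=1$, for each vertex $x$ let $x_b$ denote the unique vertex having $b=k-1$ common neighbours with $x$. A vertex $x$ is an $A$-vertex if $x$ is adjacent to $x_b$, and an $NA$-vertex otherwise. For an $NA$-vertex $x$, $x'$ denotes the unique neighbour of $x$ not adjacent to $x_b$, and $x_b'=(x')_b=(x_b)'$. *)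

(* Defs.v *)
From mathcomp Require Import all_boot.
Set Implicit Arguments. Unset Strict Implicit. Unset Printing Implicit Defensive.

Definition simple_graph (T : finType) (e : rel T) : Prop :=
  (forall x y, e x y = e y x) /\ (forall x, ~~ e x x).

Definition ncommon (T : finType) (e : rel T) (u v : T) : nat :=
  #|[set z | e u z && e v z]|.

Definition degree (T : finType) (e : rel T) (u : T) : nat :=
  #|[set z | e u z]|.

Definition deza (T : finType) (e : rel T) (n k b a : nat) : Prop :=
  [/\ simple_graph e, #|T| = n, a <= b,
      (forall u, degree e u = k) &
      (forall u v, u != v -> ncommon e u v = a \/ ncommon e u v = b)].

Definition beta (T : finType) (e : rel T) (b : nat) (v : T) : nat :=
  #|[set u | (u != v) && (ncommon e u v == b)]|.

(* xb is "x_b": the (unique, when beta = 1) vertex distinct from x with b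
   common neighbours with x *)
Definition is_bpartner (T : finType) (e : rel T) (b : nat) (x xb : T) : Prop :=
  xb != x /\ ncommon e x xb = b.

(* Main.v *)
Require Import Defs.
From mathcomp Require Import all_boot.
From mathcomp Require Import zify.

Section S.
Variables (T : finType) (e : rel T) (n k a : nat).
Hypothesis D : deza e n k k.-1 a.
Hypothesis k1 : 1 < k.
Hypothesis B : forall v, beta e k.-1 v = 1.

Lemma esym x y : e x y = e y x.
Proof. by case: D => [[s _] _ _ _ _]; apply s. Qed.

Lemma eirr x : ~~ e x x.
Proof. by case: D => [[_ s] _ _ _ _]; apply s. Qed.

Lemma ncomC u v : ncommon e u v = ncommon e v u.
Proof. by rewrite /ncommon; apply: eq_card => z; rewrite !inE andbC. Qed.

Lemma puniq v u1 u2 : u1 != v -> ncommon e u1 v = k.-1 ->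
  u2 != v -> ncommon e u2 v = k.-1 -> u1 = u2.
Proof.
move=> h1 c1 h2 c2; have /cards1P [z Hz] : #|[set u | (u != v) && (ncommon e u v == k.-1)]| == 1 by apply/eqP; apply: B.
have : u1 \in [set z] by rewrite -Hz inE h1 c1 eqxx.
have : u2 \in [set z] by rewrite -Hz inE h2 c2 eqxx.
by rewrite !inE => /eqP -> /eqP ->.
Qed.
Arguments puniq {v u1 u2}.

Lemma diff1 u ub p q : ncommon e u ub = k.-1 -> e u p -> ~~ e ub p ->
  e u q -> ~~ e ub q -> p = q.
Proof.
move=> c up nup uq nuq; apply/eqP; apply/negPn/negP => npq.
have deg : #|[set z | e u z]| = k by case: D => _ _ _ dg _; apply dg.
have h1 := cardsD1 p [set z | e u z]; rewrite inE up /= in h1.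
have h2 := cardsD1 q ([set z | e u z] :\ p).
rewrite !inE uq eq_sym npq /= in h2.
have sub : [set z | e u z && e ub z] \subset ([set z | e u z] :\ p) :\ q.
  apply/subsetP => z; rewrite !inE => /andP[uz ubz]; rewrite uz andbT.
  apply/andP; split; apply/negP => /eqP zeq.
    by move: nuq; rewrite -zeq ubz.
  by move: nup; rewrite -zeq ubz.
have := subset_leq_card sub; rewrite /ncommon in c; rewrite c; lia.
Qed.
Arguments diff1 {u ub p q}.

Lemma ncom_a x xb v : ncommon e x xb = k.-1 -> x != xb ->
  v != x -> v != xb -> ncommon e x v = a.
Proof.
move=> c nx vx vxb; have [_ _ _ _ H] := D.
have := H x v; rewrite eq_sym vx => /(_ isT) [//|c2].
have ve : v = xb.
  apply: (puniq vx); first by rewrite ncomC.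
  - by rewrite eq_sym.
  - by rewrite ncomC.
by move: vxb; rewrite ve eqxx.
Qed.
Arguments ncom_a {x xb v}.

Lemma split_nc u v p : ncommon e u v =
  (e u p && e v p) + #|[set t | e u t && e v t & t != p]|.
Proof.
rewrite /ncommon (cardsD1 p) inE; congr (_ + _).
by apply: eq_card => t; rewrite !inE andbC.
Qed.

Lemma key x xb x' xb' : ncommon e x xb = k.-1 -> x != xb -> ~~ e x xb ->
  e x x' -> ~~ e x' xb -> xb' != x' -> ncommon e x' xb' = k.-1 ->
  forall w, e xb w -> ~~ e x w -> w = xb'.
Proof.
move=> c nx nxxb xx' nx'xb nb c' w xbw nxw.
have nxbx' : ~~ e xb x' by rewrite esym.
have s1 : forall t, t != x' -> e x t -> e xb t.
  move=> t tx' xt; apply/negPn/negP => nt.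
  by move: tx'; rewrite (diff1 c xt nt xx' nxbx') eqxx.
have c2 : ncommon e xb x = k.-1 by rewrite ncomC.
have s2 : forall t, t != w -> e xb t -> e x t.
  move=> t tw xt; apply/negPn/negP => nt.
  by move: tw; rewrite (diff1 c2 xt nt xbw nxw) eqxx.
have nx2 : xb != x by rewrite eq_sym.
have s4 : forall v, v != x -> v != xb -> e x' v = e w v.
  move=> v vx vxb.
  have e1 := ncom_a c nx vx vxb.
  have e2 := ncom_a c2 nx2 vxb vx.
  have eqS : [set t | e x t && e v t & t != x'] = [set t | e xb t && e v t & t != w].
    apply/setP => t; rewrite !inE.
    case tx' : (t == x').
      by rewrite (eqP tx') (negbTE nxbx') /= andbF.
    case tw : (t == w).
      by rewrite (eqP tw) (negbTE nxw) andbF.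
    case xt : (e x t); case xbt : (e xb t) => //=.
      by move: (s1 t (negbT tx') xt); rewrite xbt.
    by move: (s2 t (negbT tw) xbt); rewrite xt.
  move: e1 e2; rewrite (split_nc x v x') (split_nc xb v w) eqS xx' xbw /= => e1 e2.
  rewrite esym (esym w).
  case: (e v x') e1; case: (e v w) e2 => //= e1 e2; lia.
have c3 : ncommon e x' w = k.-1.
  have deg : #|[set z | e x' z]| = k by case: D => _ _ _ dg _; apply dg.
  have h1 := cardsD1 x [set z | e x' z]; rewrite inE esym xx' /= in h1.
  have -> : ncommon e x' w = #|[set z | e x' z] :\ x|.
    rewrite /ncommon; apply: eq_card => t; rewrite !inE.
    case xt : (e x' t); rewrite ?andbF //=.
    case tx : (t == x).
      by rewrite (eqP tx) esym (negbTE nxw).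
    have txb : t != xb.
      by apply/negP => /eqP tb; move: nx'xb; rewrite -tb xt.
    by rewrite -s4 ?tx.
  lia.
have wx' : w != x'.
  by apply/negP => /eqP wx; move: nxw; rewrite wx xx'.
apply: (puniq wx'); first by rewrite ncomC.
- done.
- by rewrite ncomC.
Qed.
End S.

Theorem lemma15 (T : finType) (e : rel T) (n k a : nat)
  (x xb x' xb' y yb : T) :
  deza e n k k.-1 a -> 1 < k ->
  (forall v, beta e k.-1 v = 1) ->
  is_bpartner e k.-1 x xb ->
  ~~ e x xb ->                                   (* x is an NA-vertex *)
  e x x' -> ~~ e x' xb ->                        (* x' : the neighbour of x not adjacent to x_b *)
  is_bpartner e k.-1 x' xb' ->                   (* x_b' = (x')_b *)
  is_bpartner e k.-1 y yb ->
  y \notin [:: x; x'; xb; xb'] ->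
  (e x y && e x yb && e xb y && e xb yb) \/
  (~~ e x y && ~~ e x yb && ~~ e xb y && ~~ e xb yb).
Proof.
move=> D k1 B [nxb c] nxxb xx' nx'xb [nb' c'] [nyb cy] ny.
have es := @esym _ _ _ _ _ D.
have df := @diff1 _ _ _ _ _ D k1.
have ky := @key _ _ _ _ _ D k1 B.
have pu := @puniq _ _ _ B.
have nx : x != xb by rewrite eq_sym.
have c0 : ncommon e x xb = k.-1 by [].
have ncC := @ncomC T e.
have nxbx' : ~~ e xb x' by rewrite es.
move: ny; rewrite !inE !negb_or => /and4P [_ yx' _ yxb'].
have P : forall z, z != x' -> z != xb' -> e x z = e xb z.
  move=> z zx' zxb'.
  case xz : (e x z); case xbz : (e xb z) => //.
    by move: zx'; rewrite (df _ _ _ _ c0 xz (negbT xbz) xx' nxbx') eqxx.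
  by move: zxb'; rewrite (ky _ _ _ _ c0 nx nxxb xx' nx'xb nb' c' _ xbz (negbT xz)) eqxx.
have ybx' : yb != x'.
  apply/negP => /eqP E; move: yxb'; rewrite (pu x' y xb') ?eqxx //;
    first [by rewrite -E | by rewrite -E eq_sym | by rewrite -E ncC | by rewrite ncC | by rewrite eq_sym | done].
have ybxb' : yb != xb'.
  apply/negP => /eqP E; move: yx'; rewrite (pu xb' y x') ?eqxx //;
    first [by rewrite -E | by rewrite -E eq_sym | by rewrite -E ncC | by rewrite ncC | by rewrite eq_sym | done].
have E1 := P y yx' yxb'.
have E2 := P yb ybx' ybxb'.
rewrite -E1 -E2.
have cyb : ncommon e yb y = k.-1 by rewrite ncC.
case xy : (e x y); case xyb : (e x yb); try (by left); try (by right).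
- have := df y yb x xb cy; rewrite !(es y) !(es yb) -E1 -E2 xy xyb => /(_ isT isT isT isT) E.
  by move: nx; rewrite E eqxx.
- have := df yb y x xb cyb; rewrite !(es y) !(es yb) -E1 -E2 xy xyb => /(_ isT isT isT isT) E.
  by move: nx; rewrite E eqxx.
Qed.
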